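(* For every $\mathcal{C}$-orderable group $G$, the intersection of any family of $\mathcal{C}$-relatively convex subgroups of $G$ is $\mathcal{C}$-relatively convex.
   Context: A $\mathcal{C}$-ordering is a total order $\preceq$ on $G$ invariant under left multiplication such that for all $f\succ id$, $g\succ id$ there is $n\in\mathbb{N}$ with $fg^n\succ g$. A subgroup $H$ is convex for $\preceq$ if $f_1\prec h\prec f_2$ with $f_1,f_2\in H$ implies $h\in H$; $H$ is $\mathcal{C}$-relatively convex if there is a $\mathcal{C}$-ordering of $G$ for which $H$ is convex. *)

(* Defs.v *)
Set Implicit Arguments.

Record group := Group {
  carrier :> Type;
  gmul : carrier -> carrier -> carrier;
  gone : carrier;
  ginv : carrier -> carrier;
  gmulA : forall x y z, gmul x (gmul y z) = gmul (gmul x y) z;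
  gmul1 : forall x, gmul gone x = x;
  gmulV : forall x, gmul (ginv x) x = gone
}.

Section Defs.
Context {G : group}.

Fixpoint gpow (g : G) (n : nat) : G :=
  match n with
  | O => gone G
  | S m => gmul G (gpow g m) g
  end.

Definition total_order (le : G -> G -> Prop) : Prop :=
  (forall x, le x x) /\
  (forall x y, le x y -> le y x -> x = y) /\
  (forall x y z, le x y -> le y z -> le x z) /\
  (forall x y, le x y \/ le y x).

Definition strict (le : G -> G -> Prop) (x y : G) : Prop := le x y /\ x <> y.

Definition left_invariant (le : G -> G -> Prop) : Prop :=
  forall h x y, le x y -> le (gmul G h x) (gmul G h y).

Definition C_ordering (le : G -> G -> Prop) : Prop :=
  total_order le /\ left_invariant le /\
  (forall f g, strict le (gone G) f -> strict le (gone G) g ->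
     exists n : nat, strict le g (gmul G f (gpow g n))).

Definition C_orderable : Prop := exists le, C_ordering le.

Definition is_subgroup (H : G -> Prop) : Prop :=
  H (gone G) /\ (forall x y, H x -> H y -> H (gmul G x y)) /\
  (forall x, H x -> H (ginv G x)).

Definition convex (le : G -> G -> Prop) (H : G -> Prop) : Prop :=
  forall f1 f2 h, H f1 -> H f2 -> strict le f1 h -> strict le h f2 -> H h.

Definition C_rel_convex (H : G -> Prop) : Prop :=
  is_subgroup H /\ exists le, C_ordering le /\ convex le H.

End Defs.

(* Main.v *)
Require Import Defs.
From Stdlib Require Import Classical ClassicalEpsilon.


Section GroupLemmas.
Context {G : group}.
Local Notation "x ** y" := (gmul G x y) (at level 40, left associativity).
Local Notation "1" := (gone G).
Local Notation "x ^-1" := (ginv G x) (at level 3).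

Lemma mulrV (x : G) : x ** x^-1 = 1.
Proof.
  rewrite <- (gmul1 G (x ** x^-1)).
  rewrite <- (gmulV G (x^-1)) at 1.
  rewrite <- gmulA. rewrite (gmulA G (x^-1) x (x^-1)). rewrite gmulV, gmul1.
  apply gmulV.
Qed.

Lemma mulr1 (x : G) : x ** 1 = x.
Proof. rewrite <- (gmulV G x), gmulA, mulrV. apply gmul1. Qed.

Lemma mulK (x y : G) : x^-1 ** (x ** y) = y.
Proof. rewrite gmulA, gmulV. apply gmul1. Qed.

Lemma mulKV (x y : G) : x ** (x^-1 ** y) = y.
Proof. rewrite gmulA, mulrV. apply gmul1. Qed.

Lemma mulI (x y z : G) : x ** y = x ** z -> y = z.
Proof. intros E. rewrite <- (mulK x y), <- (mulK x z), E. reflexivity. Qed.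

Lemma invK (x : G) : (x^-1)^-1 = x.
Proof. apply (mulI (x^-1)). rewrite mulrV. symmetry. apply gmulV. Qed.

Lemma invM (x y : G) : (x ** y)^-1 = y^-1 ** x^-1.
Proof.
  apply (mulI (x ** y)). rewrite mulrV.
  rewrite <- gmulA, (gmulA G y), mulrV, gmul1, mulrV. reflexivity.
Qed.

Lemma inv1 : (1 : G)^-1 = 1.
Proof. rewrite <- (gmul1 G (1^-1)). apply mulrV. Qed.

Lemma gpowS_l (g : G) n : gpow g (S n) = g ** gpow g n.
Proof.
  induction n as [|n IH]; simpl. rewrite gmul1, mulr1. reflexivity.
  simpl in IH. rewrite (gmulA G g), <- IH. reflexivity.
Qed.

Lemma gpow_sq (g : G) m : gpow (g ** g) m = gpow g (m + m).
Proof.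
  induction m as [|m IH]; simpl. reflexivity.
  rewrite IH. rewrite <- plus_n_Sm. simpl. rewrite gmulA. reflexivity.
Qed.

End GroupLemmas.

Section SubG.
Context {G : group}.
Local Notation "x ** y" := (gmul G x y) (at level 40, left associativity).
Local Notation "1" := (gone G).
Local Notation "x ^-1" := (ginv G x) (at level 3).
Context (H : G -> Prop) (Hs : is_subgroup H).
Lemma H1 : H 1. Proof. apply Hs. Qed.
Lemma HM x y : H x -> H y -> H (x ** y). Proof. apply Hs. Qed.
Lemma HV x : H x -> H (x^-1). Proof. apply Hs. Qed.
Lemma HMl x y : H x -> H (x ** y) -> H y.
Proof. intros. rewrite <- (mulK x y). apply HM; auto. apply HV; auto. Qed.
Lemma HMr x y : H y -> H (x ** y) -> H x.
Proof.
  intros. replace x with ((x ** y) ** y^-1). apply HM; auto. apply HV; auto.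
  rewrite <- gmulA, mulrV. apply mulr1.
Qed.
Lemma Hpow g n : H g -> H (gpow g n).
Proof. intros Hg; induction n; simpl. apply H1. apply HM; auto. Qed.

End SubG.

Section OrderLemmas.
Context {G : group} (le : G -> G -> Prop) (Hto : total_order le) (Hli : left_invariant le).
Local Notation "x ** y" := (gmul G x y) (at level 40, left associativity).
Local Notation "1" := (gone G).
Local Notation "x ^-1" := (ginv G x) (at level 3).
Local Notation lt := (strict le).
#[local] Set Default Proof Using "Hto Hli".

Lemma le_refl x : le x x. Proof. apply Hto. Qed.
Lemma le_anti x y : le x y -> le y x -> x = y. Proof. apply Hto. Qed.
Lemma le_trans x y z : le x y -> le y z -> le x z. Proof. apply Hto. Qed.
Lemma le_total x y : le x y \/ le y x. Proof. apply Hto. Qed.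

Lemma lt_irr x : ~ lt x x. Proof. intros [_ H]. auto. Qed.
Lemma lt_asym x y : lt x y -> ~ lt y x.
Proof. intros [H1 H2] [H3 H4]. apply H2, le_anti; auto. Qed.
Lemma lt_trans x y z : lt x y -> lt y z -> lt x z.
Proof.
  intros [H1 H2] [H3 H4]. split. eapply le_trans; eauto.
  intros ->. apply H2, le_anti; auto.
Qed.
Lemma lt_total x y : x <> y -> lt x y \/ lt y x.
Proof.
  intros Hne. destruct (le_total x y); [left|right]; split; auto.
Qed.
Lemma lt_mulL h x y : lt x y -> lt (h ** x) (h ** y).
Proof.
  intros [H1 H2]. split. apply Hli; auto.
  intros E. apply H2. apply (mulI h). auto.
Qed.
Lemma lt_mulL_inv h x y : lt (h ** x) (h ** y) -> lt x y.
Proof.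
  intros H. apply (lt_mulL (h^-1)) in H. rewrite !mulK in H. auto.
Qed.
Lemma lt1_inv z : lt 1 z -> lt (z^-1) 1.
Proof.
  intros H. apply (lt_mulL (z^-1)) in H. rewrite mulr1, gmulV in H. auto.
Qed.
Lemma lt_inv1 z : lt z 1 -> lt 1 (z^-1).
Proof.
  intros H. apply (lt_mulL (z^-1)) in H. rewrite mulr1, gmulV in H. auto.
Qed.
Lemma lt_mul_pos b a : lt 1 a -> lt b (b ** a).
Proof. intros H. apply (lt_mulL b) in H. rewrite mulr1 in H. auto. Qed.

Section Conv.
Context (H : G -> Prop) (Hs : is_subgroup H) (Hc : convex le H).
#[local] Set Default Proof Using "Hto Hli Hs Hc".

Lemma Kp z h : lt 1 z -> ~ H z -> H h -> lt h z.
Proof.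
  intros Hz Hn Hh. assert (h <> z) by (intros ->; auto).
  destruct (lt_total h z) as [|Hzh]; auto.
  exfalso. apply Hn. apply (Hc 1 h z); auto. apply (H1 _ Hs).
Qed.

Lemma Kr z h : lt 1 z -> ~ H z -> H h -> lt 1 (z ** h).
Proof.
  intros Hz Hn Hh.
  assert (Hne : z ** h <> 1).
  { intros E. apply Hn. apply (HMr _ Hs z h); auto. rewrite E. apply (H1 _ Hs). }
  destruct (lt_total 1 (z ** h)) as [|Hlt]; auto.
  exfalso. apply (lt_mulL (z^-1)) in Hlt. rewrite mulK, mulr1 in Hlt.
  apply Hn. rewrite <- invK. apply (HV _ Hs).
  apply (Hc h 1); auto. apply (H1 _ Hs). apply lt1_inv; auto.
Qed.

Lemma Kl z h : lt 1 z -> ~ H z -> H h -> lt 1 (h ** z).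
Proof.
  intros Hz Hn Hh. pose proof (Kp z (h^-1) Hz Hn (HV _ Hs _ Hh)) as K.
  apply (lt_mulL h) in K. rewrite mulrV in K. auto.
Qed.

Lemma prod_out a b : lt 1 a -> lt 1 b -> ~ H a -> ~ H (a ** b).
Proof.
  intros Ha Hb Hn Hab. apply Hn. apply (Hc 1 (a ** b)); auto. apply (H1 _ Hs).
  apply lt_mul_pos; auto.
Qed.

End Conv.
End OrderLemmas.

Section Lex.
Context {G : group} (I : Type) (H : I -> G -> Prop) (Hs : forall i, is_subgroup (H i))
  (R : I -> I -> Prop) (Ranti : forall x y, R x y -> R y x -> x = y)
  (Rmin : forall Q : I -> Prop, (exists i, Q i) -> exists m, Q m /\ forall k, Q k -> R m k)
  (lei : I -> G -> G -> Prop) (leiC : forall i, C_ordering (lei i))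
  (leiV : forall i, convex (lei i) (H i))
  (le0 : G -> G -> Prop) (le0C : C_ordering le0).
Local Notation "x ** y" := (gmul G x y) (at level 40, left associativity).
Local Notation "1" := (gone G).
Local Notation "x ^-1" := (ginv G x) (at level 3).

Let to i : total_order (lei i) := proj1 (leiC i).
Let li i : left_invariant (lei i) := proj1 (proj2 (leiC i)).
Let to0 : total_order le0 := proj1 le0C.
Let li0 : left_invariant le0 := proj1 (proj2 le0C).

Definition Pos (z : G) : Prop :=
  (exists i, ~ H i z /\ (forall k, ~ R i k -> H k z) /\ strict (lei i) 1 z) \/
  ((forall i, H i z) /\ strict le0 1 z).

Definition ord (x y : G) : Prop := x = y \/ Pos (x^-1 ** y).

Lemma lev_uniq z i j : ~ H i z -> (forall k, ~ R i k -> H k z) ->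
  ~ H j z -> (forall k, ~ R j k -> H k z) -> i = j.
Proof.
  intros A B C D. apply Ranti; apply NNPP; intro E.
  - apply C, B, E.
  - apply A, D, E.
Qed.

Lemma Pos_lev z m : Pos z -> ~ H m z -> (forall k, ~ R m k -> H k z) -> strict (lei m) 1 z.
Proof.
  intros [[i [A [B C]]]|[A B]] D E.
  - rewrite (lev_uniq z m i D E A B). auto.
  - exfalso. apply D, A.
Qed.

Lemma Pos_inf z : Pos z -> (forall i, H i z) -> strict le0 1 z.
Proof.
  intros [[i [A [B C]]]|[A B]] D; auto. exfalso. apply A, D.
Qed.

Lemma Pos_ne1 z : Pos z -> z <> 1.
Proof.
  intros [[i [A _]]|[_ B]] ->. apply A. apply (H1 _ (Hs i)). apply (lt_irr _ to0 li0 _ B).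
Qed.

Lemma Hinv i z : H i (z^-1) -> H i z.
Proof. intros A. rewrite <- invK. apply (HV _ (Hs i)); auto. Qed.

Lemma get_min (z : G) : (exists k, ~ H k z) ->
  exists m, ~ H m z /\ forall k, ~ R m k -> H k z.
Proof.
  intros E. destruct (Rmin _ E) as [m [A B]]. exists m; split; auto.
  intros k C. apply NNPP. intro D. apply C, B, D.
Qed.

Lemma get_min2 (a b : G) : (exists k, ~ H k a \/ ~ H k b) ->
  exists m, (~ H m a \/ ~ H m b) /\ forall k, ~ R m k -> H k a /\ H k b.
Proof.
  intros E. destruct (Rmin _ E) as [m [A B]]. exists m; split; auto.
  intros k C. apply NNPP. intro D. apply C, B.
  apply not_and_or in D. auto.
Qed.

Lemma inf_or_not (z : G) : (forall i, H i z) \/ exists k, ~ H k z.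
Proof.
  destruct (classic (exists k, ~ H k z)) as [|A]; auto. left. intro i.
  apply NNPP. intro B. apply A. eauto.
Qed.

Lemma Pos_mul a b : Pos a -> Pos b -> Pos (a ** b).
Proof.
  intros Pa Pb.
  destruct (classic (exists k, ~ H k a \/ ~ H k b)) as [E|E].
  - destruct (get_min2 a b E) as [m [A B]]. left. exists m.
    assert (Bab : forall k, ~ R m k -> H k (a ** b)).
    { intros k C. destruct (B k C). apply (HM _ (Hs k)); auto. }
    destruct (classic (H m a)) as [Ha|Ha]; destruct (classic (H m b)) as [Hb|Hb].
    + exfalso. destruct A; auto.
    + assert (Lb : strict (lei m) 1 b).
      { apply Pos_lev; auto. intros k C. apply (B k C). }
      refine (conj _ (conj _ _)); auto.
      * intro C. apply Hb. apply (HMl _ (Hs m) a b); auto.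
      * apply (Kl _ (to m) (li m) _ (Hs m) (leiV m)); auto.
    + assert (La : strict (lei m) 1 a).
      { apply Pos_lev; auto. intros k C. apply (B k C). }
      refine (conj _ (conj _ _)); auto.
      * intro C. apply Ha. apply (HMr _ (Hs m) a b); auto.
      * apply (Kr _ (to m) (li m) _ (Hs m) (leiV m)); auto.
    + assert (La : strict (lei m) 1 a).
      { apply Pos_lev; auto. intros k C. apply (B k C). }
      assert (Lb : strict (lei m) 1 b).
      { apply Pos_lev; auto. intros k C. apply (B k C). }
      refine (conj _ (conj _ _)); auto.
      * apply (prod_out _ (to m) (li m) _ (Hs m) (leiV m)); auto.
      * eapply (lt_trans _ (to m) (li m)). apply La. apply (lt_mul_pos _ (to m) (li m)); auto.
  - assert (Ia : forall i, H i a). { intro i. apply NNPP. intro C. apply E. eauto. }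
    assert (Ib : forall i, H i b). { intro i. apply NNPP. intro C. apply E. eauto. }
    right. split. intro i. apply (HM _ (Hs i)); auto.
    eapply (lt_trans _ to0 li0). apply (Pos_inf a); auto. apply (lt_mul_pos _ to0 li0).
    apply Pos_inf; auto.
Qed.

Lemma Pos_anti z : Pos z -> Pos (z^-1) -> False.
Proof.
  intros Pz Pi. destruct Pz as [[i [A [B C]]]|[A B]].
  - assert (L : strict (lei i) 1 (z^-1)).
    { apply Pos_lev; auto. intro D; apply A, Hinv, D.
      intros k D. apply (HV _ (Hs k)); auto. }
    apply (lt_asym _ (to i) (li i) _ _ L). apply (lt1_inv _ (to i) (li i)); auto.
  - assert (L : strict le0 1 (z^-1)).
    { apply Pos_inf; auto. intros k. apply (HV _ (Hs k)); auto. }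
    apply (lt_asym _ to0 li0 _ _ L). apply (lt1_inv _ to0 li0); auto.
Qed.

Lemma Pos_total z : z <> 1 -> Pos z \/ Pos (z^-1).
Proof.
  intros Hne. destruct (inf_or_not z) as [A|A].
  - destruct (lt_total _ to0 li0 1 z) as [L|L]; auto.
    + left. right. auto.
    + right. right. split. intro i. apply (HV _ (Hs i)); auto.
      apply (lt_inv1 _ to0 li0); auto.
  - destruct (get_min z A) as [m [B C]].
    destruct (lt_total _ (to m) (li m) 1 z) as [L|L].
    { intros E. rewrite <- E in B. apply B, (H1 _ (Hs m)). }
    + left. left. exists m. auto.
    + right. left. exists m. refine (conj _ (conj _ _)).
      * intro D. apply B, Hinv, D.
      * intros k D. apply (HV _ (Hs k)); auto.
      * apply (lt_inv1 _ (to m) (li m)); auto.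
Qed.

Lemma ord_total_order : total_order ord.
Proof.
  refine (conj _ (conj _ (conj _ _))).
  - intros x. left. auto.
  - intros x y [E|A] [E'|B]; auto.
    exfalso. apply (Pos_anti _ A). rewrite invM, invK. auto.
  - intros x y z [->|A] [<-|B]; unfold ord; auto.
    right. replace (x^-1 ** z) with ((x^-1 ** y) ** (y^-1 ** z)).
    apply Pos_mul; auto. rewrite <- gmulA, mulKV. reflexivity.
  - intros x y. destruct (classic (x = y)) as [->|Hne]. left; left; auto.
    destruct (Pos_total (x^-1 ** y)) as [A|A].
    + intro E. apply Hne. rewrite <- (mulKV x y), E. symmetry. apply mulr1.
    + left; right; auto.
    + right; right. rewrite invM, invK in A. auto.
Qed.

Lemma ord_li : left_invariant ord.
Proof.
  intros h x y [->|A]. left; auto. right.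
  rewrite invM, <- gmulA, mulK. auto.
Qed.

Lemma ord_strict x y : Pos (x^-1 ** y) -> strict ord x y.
Proof.
  intros A. split. right; auto. intros ->. apply (Pos_ne1 _ A). apply gmulV.
Qed.

Lemma strict_ord x y : strict ord x y -> Pos (x^-1 ** y).
Proof. intros [[E|A] B]; [contradiction|auto]. Qed.

Lemma ord_conv : convex ord (fun g => forall i, H i g).
Proof.
  intros f1 f2 h F1 F2 L1 L2 i. apply strict_ord in L1. apply strict_ord in L2.
  apply NNPP. intro Hn.
  destruct (get_min h (ex_intro _ i Hn)) as [m [A B]].
  assert (N1 : ~ H m (f1^-1 ** h)).
  { intro C. apply A. rewrite <- (mulKV f1 h). apply (HM _ (Hs m)); auto. }
  assert (N2 : ~ H m (h^-1 ** f2)).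
  { intro C. apply A. apply Hinv. rewrite <- (mulr1 (h^-1)), <- (mulrV f2), gmulA.
    apply (HM _ (Hs m)); auto. apply (HV _ (Hs m)); auto. }
  assert (C1 : strict (lei m) 1 (f1^-1 ** h)).
  { apply Pos_lev; auto. intros k D. apply (HM _ (Hs k)); auto. apply (HV _ (Hs k)); auto. }
  assert (C2 : strict (lei m) 1 (h^-1 ** f2)).
  { apply Pos_lev; auto. intros k D. apply (HM _ (Hs k)); auto. apply (HV _ (Hs k)); auto. }
  apply (prod_out _ (to m) (li m) _ (Hs m) (leiV m) _ _ C1 C2 N1).
  rewrite <- gmulA, mulKV. apply (HM _ (Hs m)); auto. apply (HV _ (Hs m)); auto.
Qed.

Lemma ord_conrad : forall f g, strict ord 1 f -> strict ord 1 g ->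
  exists n : nat, strict ord g (f ** gpow g n).
Proof.
  intros f g Lf Lg. apply strict_ord in Lf. apply strict_ord in Lg.
  rewrite inv1, gmul1 in Lf, Lg.
  destruct (classic (exists k, ~ H k f \/ ~ H k g)) as [E|E].
  - destruct (get_min2 f g E) as [m [A B]].
    destruct (classic (H m g)) as [Hg|Hg].
    +
      assert (Hf : ~ H m f) by (destruct A; auto).
      assert (Lfm : strict (lei m) 1 f).
      { apply Pos_lev; auto. intros k C. apply (B k C). }
      exists 0. apply ord_strict. simpl. rewrite mulr1. left. exists m. refine (conj _ (conj _ _)).
      * intro C. apply Hf. rewrite <- (mulKV g f). apply (HM _ (Hs m)); auto.
      * intros k C. destruct (B k C). apply (HM _ (Hs k)); auto. apply (HV _ (Hs k)); auto.
      * pose proof (Kp _ (to m) (li m) _ (Hs m) (leiV m) f g Lfm Hf Hg) as K.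
        apply (lt_mulL _ (to m) (li m) (g^-1)) in K. rewrite gmulV in K. auto.
    + assert (Lgm : strict (lei m) 1 g).
      { apply Pos_lev; auto. intros k C. apply (B k C). }
      assert (Lu : strict (lei m) 1 (f ** g)).
      { destruct (classic (H m f)) as [Hf|Hf].
        - apply (Kl _ (to m) (li m) _ (Hs m) (leiV m)); auto.
        - assert (Lfm : strict (lei m) 1 f).
          { apply Pos_lev; auto. intros k C. apply (B k C). }
          eapply (lt_trans _ (to m) (li m)). apply Lfm. apply (lt_mul_pos _ (to m) (li m)); auto. }
      assert (Lg2 : strict (lei m) 1 (g ** g)).
      { eapply (lt_trans _ (to m) (li m)). apply Lgm. apply (lt_mul_pos _ (to m) (li m)); auto. }
      destruct (proj2 (proj2 (leiC m)) _ _ Lu Lg2) as [n Ln].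
      assert (Eq : f ** g ** gpow (g ** g) n = f ** gpow g (S (n + n))).
      { rewrite gpow_sq, gpowS_l, gmulA. reflexivity. }
      rewrite Eq in Ln. exists (S (n + n)). apply ord_strict.
      apply (lt_mulL _ (to m) (li m) (g^-1)) in Ln. rewrite mulK in Ln.
      assert (Lw : strict (lei m) 1 (g^-1 ** (f ** gpow g (S (n + n))))).
      { eapply (lt_trans _ (to m) (li m)). apply Lgm. auto. }
      left. exists m. refine (conj _ (conj _ _)).
      * intro C. apply Hg. apply (leiV m 1 (g^-1 ** (f ** gpow g (S (n + n))))); auto.
        apply (H1 _ (Hs m)).
      * intros k C. destruct (B k C). apply (HM _ (Hs k)); auto. apply (HV _ (Hs k)); auto.
        apply (HM _ (Hs k)); auto. apply (Hpow _ (Hs k)); auto.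
      * exact Lw.
  - assert (If : forall i, H i f). { intro i. apply NNPP. intro C. apply E. eauto. }
    assert (Ig : forall i, H i g). { intro i. apply NNPP. intro C. apply E. eauto. }
    destruct (proj2 (proj2 le0C) f g (Pos_inf f Lf If) (Pos_inf g Lg Ig)) as [n Ln].
    exists n. apply ord_strict. right. split.
    + intro i. apply (HM _ (Hs i)). apply (HV _ (Hs i)); auto.
      apply (HM _ (Hs i)); auto. apply (Hpow _ (Hs i)); auto.
    + apply (lt_mulL _ to0 li0 (g^-1)) in Ln. rewrite gmulV in Ln. auto.
Qed.

Lemma ord_C : C_ordering ord.
Proof. split. apply ord_total_order. split. apply ord_li. apply ord_conrad. Qed.

End Lex.
From HB Require Import structures.
From mathcomp Require Import ssreflect ssrfun ssrbool eqtype.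
From mathcomp Require boolp wochoice.

Definition wrapT (I : Type) : Type := I.
HB.instance Definition _ (I : Type) := boolp.gen_eqMixin (wrapT I).

Lemma wo_exists (I : Type) : exists R : I -> I -> Prop,
  (forall x y, R x y -> R y x -> x = y) /\
  (forall Q : I -> Prop, (exists i, Q i) -> exists m, Q m /\ forall k, Q k -> R m k).
Proof.
have [R wR] := wochoice.well_ordering_principle (wrapT I).
have minP : forall Q : I -> Prop, (exists i, Q i) -> exists m, Q m /\ forall k, Q k -> R m k.
  move=> Q [i Qi].
  have ne : wochoice.nonempty (fun k : wrapT I => (boolp.asbool (Q k))).
    by exists i; apply/boolp.asboolP.
  have [m [[Am lb] _]] := wR _ ne.
  exists m; split.
    by move: Am; move=> /boolp.asboolP.
  move=> k Qk; apply: lb; exact/boolp.asboolP.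
exists (fun x y => R x y); split; last exact: minP.
move=> x y Rxy Ryx.
have [m [Qm lbm]] := minP (fun k => k = x \/ k = y) (ex_intro _ x (or_introl erefl)).
have Rxx : R x x.
  have [z [Qz lbz]] := minP (fun k => k = x) (ex_intro _ x erefl).
  by rewrite -Qz in lbz *; apply: lbz.
have ne : wochoice.nonempty (fun k : wrapT I => (boolp.asbool (k = x \/ k = y))).
  by exists x; apply/boolp.asboolP; left.
have [z [_ uz]] := wR _ ne.
have mx : wochoice.minimum_of R (fun k : wrapT I => (boolp.asbool (k = x \/ k = y))) x.
  split; first by apply/boolp.asboolP; left.
  by move=> a; move=> /boolp.asboolP [->|->].
have my : wochoice.minimum_of R (fun k : wrapT I => (boolp.asbool (k = x \/ k = y))) y.
  split; first by apply/boolp.asboolP; right.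
  move=> a; move=> /boolp.asboolP [->|->] //.
  have [w [Qw lbw]] := minP (fun k => k = y) (ex_intro _ y erefl).
  by rewrite -Qw in lbw *; apply: lbw.
by rewrite -(uz _ mx) -(uz _ my).
Qed.

Theorem mainTheorem19 (G : group) (I : Type) (H : I -> G -> Prop) :
  @C_orderable G ->
  (forall i, C_rel_convex (H i)) ->
  C_rel_convex (fun g : G => forall i, H i g).
Proof.
move=> [le0 C0] HC.
have Hs : forall i, is_subgroup (H i) by move=> i; case: (HC i).
split.
  split; first by move=> i; apply: (H1 _ (Hs i)).
  split.
    by move=> x y Hx Hy i; apply: (HM _ (Hs i)).
  by move=> x Hx i; apply: (HV _ (Hs i)).
have [R [Ranti Rmin]] := wo_exists I.
pose lei i := proj1_sig (constructive_indefinite_description _ (proj2 (HC i))).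
have leiP : forall i, C_ordering (lei i) /\ convex (lei i) (H i).
  by move=> i; apply: (proj2_sig (constructive_indefinite_description _ (proj2 (HC i)))).
exists (ord I H R lei le0); split.
  apply: ord_C => //; by move=> i; case: (leiP i).
apply: ord_conv => //; by move=> i; case: (leiP i).
Qed.
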